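(* Let $1\le p\le\infty$ and let $A=\{[x_i^a,y_i^a]\}_{i=1}^{n_a}$ and $B=\{[x_i^b,y_i^b]\}_{i=1}^{n_b}$ be persistence barcodes in $\mathcal{B}_F$ with positive total lengths $L_a,L_b>0$. If the relative error satisfies $r_p(A,B)<1/4$, then $$|E(A)-E(B)|\le 2r_p(A,B)\left[\log(n_{\max})-\log\big(2r_p(A,B)\big)\right].$$
   Context: A persistence barcode is a finite multiset of intervals $[x,y]$ with $x\le y$; $\mathcal{B}_F$ denotes the set of persistence barcodes all of whose intervals have finite endpoints ($x,y\in\mathbb{R}$). For $A=\{[x_i^a,y_i^a]\}_{i=1}^{n_a}$ write $\ell_i^a=y_i^a-x_i^a$ and $L_a=\sum_i\ell_i^a$; similarly for $B$. Put $n_{\max}=\max\{n_a,n_b\}$, $L_{\max}=\max\{L_a,L_b\}$. The $p$-th Wasserstein distance: if $n_a\neq n_b$, add intervals of zero length $[t,t]$ to the smaller barcode until both have $n_{\max}$ intervals; then for $1\le p<\infty$, $d_p(A,B)=\big(\min_\gamma\sum_{i=1}^{n_{\max}}\max\{|x_i^a-x^b_{\gamma(i)}|^p,|y_i^a-y^b_{\gamma(i)}|^p\}\big)^{1/p}$ and $d_\infty(A,B)=\min_\gamma\max_i\max\{|x_i^a-x^b_{\gamma(i)}|,|y_i^a-y^b_{\gamma(i)}|\}$, the minimum being over bijections $\gamma$ between the (padded) multisets (and the choices of added zero-length intervals). The persistent entropy of $A\in\mathcal{B}_F$ with $L_a>0$ is $E(A)=-\sum_{i=1}^{n_a}\frac{\ell_i^a}{L_a}\log\frac{\ell_i^a}{L_a}$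 (with $0\log 0=0$). The relative error is $r_p(A,B)=\dfrac{2\,n_{\max}^{1-1/p}\,d_p(A,B)}{L_{\max}}$, where $n_{\max}^{1-1/\infty}=n_{\max}$. Convention: $0\log 0=0$. *)

(* Defs.v *)
From HB Require Import structures.
From mathcomp Require Import all_boot all_order all_algebra all_fingroup.
From mathcomp Require Import all_classical all_reals all_analysis.
Set Implicit Arguments. Unset Strict Implicit. Unset Printing Implicit Defensive.
Import Order.TTheory GRing.Theory Num.Theory.
Local Open Scope classical_set_scope.
Local Open Scope ring_scope.

Section Barcodes.
Variable R : realType.

(* A barcode in B_F: a finite multiset of intervals [x,y], x <= y, with
   finite endpoints, represented as a list of pairs (x, y) (order irrelevant). *)
Definition barcode (A : seq (R * R)) : bool := all (fun I => I.1 <= I.2) A.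

Definition bar_len (I : R * R) : R := I.2 - I.1.
Definition total_len (A : seq (R * R)) : R := \sum_(I <- A) bar_len I.
Definition nmax (A B : seq (R * R)) : nat := maxn (size A) (size B).
Definition Lmax (A B : seq (R * R)) : R := Num.max (total_len A) (total_len B).

Definition pad (A : seq (R * R)) (ts : seq R) : seq (R * R) :=
  A ++ [seq (t, t) | t <- ts].

Definition mcost (q : R) n (A' B' : seq (R * R)) (s : 'S_n) (i : 'I_n) : R :=
  Num.max (`|(nth (0,0) A' i).1 - (nth (0,0) B' (s i)).1| `^ q)
          (`|(nth (0,0) A' i).2 - (nth (0,0) B' (s i)).2| `^ q).

Definition mcost_inf n (A' B' : seq (R * R)) (s : 'S_n) (i : 'I_n) : R :=
  Num.max (`|(nth (0,0) A' i).1 - (nth (0,0) B' (s i)).1|)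
          (`|(nth (0,0) A' i).2 - (nth (0,0) B' (s i)).2|).

Definition wcosts (q : R) (A B : seq (R * R)) : set R :=
  [set c | exists (ta tb : seq R) (s : 'S_(nmax A B)),
     [/\ size ta = (nmax A B - size A)%N, size tb = (nmax A B - size B)%N &
         c = \sum_(i < nmax A B) mcost q (pad A ta) (pad B tb) s i]].

Definition wcosts_inf (A B : seq (R * R)) : set R :=
  [set c | exists (ta tb : seq R) (s : 'S_(nmax A B)),
     [/\ size ta = (nmax A B - size A)%N, size tb = (nmax A B - size B)%N &
         c = \big[Num.max/0]_(i < nmax A B) mcost_inf (pad A ta) (pad B tb) s i]].

(* p-th Wasserstein distance, p in [1, +oo] given as an extended real;
   the minimum of the paper is written as an infimum (it is attained). *)
Definition wdist (p : \bar R) (A B : seq (R * R)) : R :=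
  match p with
  | EFin q => (inf (wcosts q A B)) `^ q^-1
  | _ => inf (wcosts_inf A B)
  end.

Definition xlnx (x : R) : R := if x == 0 then 0 else x * ln x.

Definition pentropy (A : seq (R * R)) : R :=
  - \sum_(I <- A) xlnx (bar_len I / total_len A).

Definition nfactor (p : \bar R) (n : nat) : R :=
  match p with
  | EFin q => (n%:R) `^ (1 - q^-1)
  | _ => n%:R
  end.

Definition relerr (p : \bar R) (A B : seq (R * R)) : R :=
  2 * nfactor p (nmax A B) * wdist p A B / Lmax A B.

End Barcodes.

(* Main.v *)
Require Import Defs.
From HB Require Import structures.
From mathcomp Require Import all_boot all_order all_algebra all_fingroup.
From mathcomp Require Import all_classical all_reals all_analysis.
From mathcomp Require Import ring lra.
Import Order.TTheory GRing.Theory Num.Theory.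
Local Open Scope ring_scope.



Section RealLemmas.
Variable R : realType.
Implicit Types x y t a b : R.

Lemma lnle a b : 0 < a -> 0 < b -> b * (ln a - ln b) <= a - b.
Proof.
move=> a0 b0; rewrite -ln_div ?posrE //.
have ab : -1 < a / b - 1 by rewrite ltrBrDl; have := divr_gt0 a0 b0; lra.
have := le_ln1Dx ab.
rewrite [1 + _]addrC subrK => H.
have -> : a - b = b * (a / b - 1) by rewrite mulrBr mulr1 [b * _]mulrC -mulrA mulVf ?gt_eqF // mulr1.
by rewrite ler_pM2l.
Qed.

Arguments lnle {a b}.

Lemma ln2_ge : 2^-1 <= ln (2 : R).
Proof.
have h2 : (0:R) < 2 by lra.
have := @lnle 1 2 ltr01 h2.
rewrite ln1 => H; lra.
Qed.

Lemma xlnxE x : xlnx x = x * ln x.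
Proof. by rewrite /xlnx; case: eqP => [->|]; rewrite ?mul0r. Qed.

Lemma xlnx_sup x t : 0 <= x -> 0 <= t -> xlnx x + xlnx t <= xlnx (x + t).
Proof.
rewrite !xlnxE => x0 t0; rewrite mulrDl.
have [->|xp] := eqVneq x 0; first by rewrite !mul0r !add0r.
have [->|tp] := eqVneq t 0; first by rewrite !mul0r !addr0.
have xp' : 0 < x by rewrite lt_neqAle eq_sym xp.
have tp' : 0 < t by rewrite lt_neqAle eq_sym tp.
apply: lerD; rewrite ler_pM2l // ler_ln ?posrE ?addr_gt0 //.
  by rewrite lerDl.
by rewrite lerDr.
Qed.

Lemma mono_aux x x' t : 0 < x -> x <= x' -> 0 < t ->
  x * (ln (x + t) - ln x) <= x' * (ln (x' + t) - ln x').
Proof.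
move=> x0 xx' t0.
have x'0 : 0 < x' by apply: lt_le_trans xx'.
have hu := lnle x'0 (addr_gt0 x'0 t0).
have hv := lnle (mulr_gt0 x'0 (addr_gt0 x0 t0)) (mulr_gt0 (addr_gt0 x'0 t0) x0).
rewrite !lnM ?posrE ?addr_gt0 // in hv.
set L1 := ln (x' + t) in hu hv *; set L2 := ln x' in hu hv *.
set L3 := ln (x + t) in hv *; set L4 := ln x in hv *.
have hd : 0 <= x' - x by rewrite subr_ge0.
have h1 : 0 <= (x' - x) * (x' - (x' + t) - (x' + t) * (L2 - L1)).
  by apply: mulr_ge0 => //; rewrite subr_ge0.
have xt : 0 < x' + t by rewrite addr_gt0.
rewrite -subr_ge0 -(pmulr_rge0 _ xt).
nra.
Qed.

Arguments mono_aux {x x' t}.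

Lemma tlnt_aux t : 0 < t -> t <= 2^-1 -> (1 - t) * (0 - ln (1 - t)) <= - (t * ln t).
Proof.
move=> t0 th.
have t1 : 0 < 1 - t by lra.
have h1 := lnle t0 t1.
have h2 := lnle ltr01 t1.
rewrite ln1 in h2.
have h3 : 0 <= t * (t - (1 - t) - (1 - t) * (ln t - ln (1 - t))) by apply: mulr_ge0 => //; [lra|lra].
have h4 : 0 <= (1 - 2 * t) * (1 - (1 - t) - (1 - t) * (0 - ln (1 - t))) by apply: mulr_ge0; lra.
rewrite -subr_ge0 -(pmulr_rge0 _ t1).
nra.
Qed.

Arguments tlnt_aux {t}.

Lemma xlnx_sub x t : 0 <= x -> 0 <= t -> t <= 2^-1 -> x + t <= 1 ->
  xlnx (x + t) - xlnx x <= - xlnx t.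
Proof.
rewrite !xlnxE => x0 t0 th xt1.
have [->|tp] := eqVneq t 0; first by rewrite addr0 subrr mul0r oppr0.
have tp' : 0 < t by rewrite lt_neqAle eq_sym tp.
have [->|xp] := eqVneq x 0.
  rewrite add0r mul0r subr0.
  have : ln t <= 0 by apply: ln_le0; lra.
  nra.
have xp' : 0 < x by rewrite lt_neqAle eq_sym xp.
have hm := mono_aux xp' (_ : x <= 1 - t) tp'.
rewrite subrK ln1 in hm.
have hm' := hm ltac:(lra).
have ht := tlnt_aux tp' th.
have hl : ln (x + t) <= 0 by apply: ln_le0.
have : t * ln (x + t) <= 0 by nra.
nra.
Qed.

Arguments xlnx_sub {x t}.
Arguments xlnx_sup {x t}.

Lemma xlnx_cont x y : 0 <= x <= 1 -> 0 <= y <= 1 -> `|x - y| <= 2^-1 ->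
  `|xlnx y - xlnx x| <= - xlnx `|x - y|.
Proof.
wlog: x y / x <= y.
  move=> H hx hy hxy; have [le|lt] := leP x y; first exact: H.
  rewrite distrC (distrC x); apply: H => //; first exact: ltW.
  by rewrite distrC.
move=> xy /andP[x0 x1] /andP[y0 y1] h.
rewrite distrC ger0_norm ?subr_ge0 // in h *.
have t0 : 0 <= y - x by rewrite subr_ge0.
move: t0 h; set t := y - x => t0 h.
have -> : y = x + t by rewrite /t addrC subrK.
rewrite ler_norml; apply/andP; split.
  have := xlnx_sup x0 t0. lra.
apply: xlnx_sub => //.
by rewrite /t addrC subrK.
Qed.

End RealLemmas.
Arguments lnle {R a b}.



Section L2.
Variable R : realType.

Lemma gibbs n (t : 'I_n -> R) : (0 < n)%N -> (forall i, 0 <= t i) ->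
  \sum_i - xlnx (t i) <= (\sum_i t i) * ln n%:R - xlnx (\sum_i t i).
Proof.
move=> n0 t0; set T := \sum_i t i.
have T0 : 0 <= T by apply: sumr_ge0.
have np : (0 : R) < n%:R by rewrite ltr0n.
have [TZ|Tp] := eqVneq T 0.
  have tz : forall i, t i = 0.
    move=> i; apply/eqP; rewrite eq_le t0 andbT.
    by rewrite -TZ /T (bigD1 i) //= lerDl sumr_ge0.
  rewrite TZ mul0r /xlnx eqxx subrr.
  by rewrite big1 // => i _; rewrite tz /xlnx eqxx oppr0.
have Tp' : 0 < T by rewrite lt_neqAle eq_sym Tp.
have pw : forall i, - xlnx (t i) <= T / n%:R - t i + t i * (ln n%:R - ln T).
  move=> i; rewrite xlnxE.
  have [->|tp] := eqVneq (t i) 0.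
    rewrite !mul0r oppr0; have := divr_ge0 T0 (ltW np); lra.
  have tp' : 0 < t i by rewrite lt_neqAle eq_sym tp t0.
  have := lnle Tp' (mulr_gt0 np tp').
  rewrite lnM ?posrE //.
  have nn : n%:R * (T / n%:R) = T by rewrite mulrC -mulrA mulVf ?gt_eqF // mulr1.
  move: (T / n%:R) nn => u nn.
  rewrite -nn => H.
  set L := ln (t i) in H *; set Ln := ln n%:R in H *; set LT := ln T in H *.
  nra.
apply: le_trans (ler_sum _ (fun i _ => pw i)) _.
rewrite big_split /= big_split /= sumrN -[\sum_(i < n) t i * _]mulr_suml -/T sumr_const card_ord.
have -> : T / n%:R *+ n = T by rewrite -mulr_natr mulfVK ?gt_eqF.
rewrite xlnxE mulrBr; lra.
Qed.

Lemma fmono0 (n : nat) (S : R) : (0 < n)%N -> 0 <= S -> S <= 2^-1 ->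
  0 <= S * ln n%:R - xlnx S.
Proof.
move=> n0 S0 S2; rewrite xlnxE.
have ln0 : 0 <= ln (n%:R : R) by apply: ln_ge0; rewrite ler1n.
have lS : ln S <= 0 by apply: ln_le0; lra.
have : 0 <= S * ln n%:R by apply: mulr_ge0.
have : S * ln S <= 0 by rewrite mulr_ge0_le0.
lra.
Qed.

Lemma fmono (n : nat) (T S : R) : (0 < n)%N -> 0 <= T -> T <= S -> S <= 2^-1 ->
  (T = 0 \/ (1 < n)%N) ->
  T * ln n%:R - xlnx T <= S * ln n%:R - xlnx S.
Proof.
move=> n0 T0 TS S2 HT.
have [TZ|Tp] := eqVneq T 0.
  have x0 : xlnx (0 : R) = 0 by rewrite /xlnx eqxx.
  rewrite TZ mul0r x0 subrr; apply: fmono0 => //; lra.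
case: HT => [TZ|n2]; first by rewrite TZ eqxx in Tp.
have Tp' : 0 < T by rewrite lt_neqAle eq_sym Tp.
have Sp : 0 < S by lra.
rewrite !xlnxE.
have h1 := lnle Sp Tp'.
have l2 := ln2_ge R.
have ln2n : ln 2 <= ln (n%:R : R).
  by rewrite ler_ln ?posrE ?ltr0n // (ler_nat R 2 n).
have lS : ln S <= - ln 2.
  have : ln S <= ln 2^-1 by rewrite ler_ln ?posrE // ?invr_gt0; lra.
  by rewrite lnV ?posrE; lra.
have hd : 0 <= S - T by lra.
have : 0 <= (S - T) * (ln n%:R - ln S - 1) by apply: mulr_ge0 => //; lra.
nra.
Qed.

End L2.



Section L3.
Variable R : realType.

Lemma l1_prob n (a b : 'I_n -> R) : (forall i, 0 <= a i) -> (forall i, 0 <= b i) ->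
  0 < \sum_i a i -> 0 < \sum_i b i ->
  \sum_i `|a i / (\sum_j a j) - b i / (\sum_j b j)| <=
  2 * (\sum_i `|a i - b i|) / Num.max (\sum_i a i) (\sum_i b i).
Proof.
move=> a0 b0 Sa0 Sb0.
wlog: a b a0 b0 Sa0 Sb0 / \sum_i b i <= \sum_i a i.
  move=> H; case/orP: (le_total (\sum_i b i) (\sum_i a i)) => h; first exact: H.
  have := H b a b0 a0 Sb0 Sa0 h.
  rewrite maxC.
  have -> : \sum_i `|b i / (\sum_j b j) - a i / (\sum_j a j)| =
            \sum_i `|a i / (\sum_j a j) - b i / (\sum_j b j)|.
    by apply: eq_bigr => i _; rewrite distrC.
  have -> : \sum_i `|b i - a i| = \sum_i `|a i - b i|.
    by apply: eq_bigr => i _; rewrite distrC.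
  by [].
move=> hab.
rewrite max_l //.
set Sa := \sum_i a i; set Sb := \sum_i b i; set D := \sum_i `|a i - b i|.
set ia := Sa^-1; set ib := Sb^-1.
have iale : ia <= ib by rewrite /ia /ib lef_pV2 ?posrE.
have ia0 : 0 < ia by rewrite invr_gt0.
have pw : forall i, `|a i / Sa - b i / Sb| <= `|a i - b i| * ia + b i * (ib - ia).
  move=> i.
  have -> : a i / Sa - b i / Sb = (a i - b i) * ia + b i * (ia - ib).
    rewrite /ia /ib; ring.
  apply: le_trans (ler_normD _ _) _.
  rewrite !normrM (gtr0_norm ia0) (ger0_norm (b0 i)) (@ler0_norm _ (ia - ib)) ?subr_le0 //.
  by rewrite opprB.
apply: le_trans (ler_sum _ (fun i _ => pw i)) _.
rewrite big_split /= -!mulr_suml -/D -/Sb.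
have hD : Sa - Sb <= D.
  rewrite /Sa /Sb -sumrB; apply: ler_sum => i _; exact: ler_norm.
have e1 : Sa * ia = 1 by rewrite /ia mulfV // gt_eqF.
have e2 : Sb * ib = 1 by rewrite /ib mulfV // gt_eqF.
have h3 : 0 <= (D - (Sa - Sb)) * ia by apply: mulr_ge0; lra.
rewrite mulrBr e2 -mulrA.
nra.
Qed.

Lemma powmean n (m : 'I_n -> R) q : (0 < n)%N -> 1 <= q -> (forall i, 0 <= m i) ->
  \sum_i m i <= n%:R `^ (1 - q^-1) * (\sum_i m i `^ q) `^ q^-1.
Proof.
move=> n0 q1 m0.
have np : (0 : R) < n%:R by rewrite ltr0n.
have sm0 : 0 <= \sum_i m i by apply: sumr_ge0.
have [->|qn1] := eqVneq q 1.
  rewrite invr1 subrr powRr0 mul1r powRr1; last by apply: sumr_ge0 => i _; apply: powR_ge0.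
  by rewrite [X in _ <= X](eq_bigr (fun i => m i)) // => i _; rewrite powRr1.
have q1' : 1 < q by rewrite lt_neqAle eq_sym qn1 q1.
have q0 : 0 < q by lra.
set S := \sum_i m i `^ q.
have S0 : 0 <= S by apply: sumr_ge0 => i _; apply: powR_ge0.
have [SZ|Sn] := eqVneq S 0.
  have mz : forall i, m i = 0.
    move=> i; apply: (@powR_eq0_eq0 _ _ q); apply/eqP; rewrite eq_le powR_ge0 andbT.
    by rewrite -SZ /S (bigD1 i) //= lerDl sumr_ge0 // => j _; apply: powR_ge0.
  rewrite big1 //; apply: mulr_ge0; apply: powR_ge0.
have Sp : 0 < S by rewrite lt_neqAle eq_sym Sn S0.
set lam := (n%:R / S) `^ q^-1.
have lam0 : 0 < lam by apply: powR_gt0; apply: divr_gt0.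
have lamq : lam `^ q = n%:R / S.
  by rewrite /lam -powRrM mulVf ?gt_eqF // powRr1 // ltW // divr_gt0.
set q' := q / (q - 1).
have q'0 : 0 < q' by apply: divr_gt0; lra.
have qq : q^-1 + q'^-1 = 1.
  rewrite /q' invf_div.
  have qz : q != 0 by rewrite gt_eqF.
  by field.
have young : forall i, lam * m i <= m i `^ q * (n%:R / S) / q + q'^-1.
  move=> i; have := conjugate_powR (mulr_ge0 (ltW lam0) (m0 i)) ler01 q0 q'0 qq.
  by rewrite mulr1 powR1 powRM ?(ltW lam0) // lamq mul1r (mulrC (n%:R / S)) mulrA.
have hsum : lam * \sum_i m i <= n%:R.
  rewrite mulr_sumr; apply: le_trans (ler_sum _ (fun i _ => young i)) _.
  rewrite big_split /= sumr_const card_ord -!mulr_suml -/S.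
  have -> : S * (n%:R / S) / q = n%:R / q.
    by rewrite mulrCA mulfV ?gt_eqF // mulr1.
  have -> : q'^-1 *+ n = n%:R * q'^-1 by rewrite mulr_natl.
  have -> : q'^-1 = 1 - q^-1 by lra.
  lra.
have hR : n%:R `^ (1 - q^-1) * S `^ q^-1 * lam = n%:R.
  rewrite /lam -mulrA -powRM //; last by apply: ltW; apply: divr_gt0.
  rewrite mulrCA mulfV ?gt_eqF // mulr1 -powRD.
    by rewrite subrK powRr1 // ltW.
  by rewrite subrK oner_eq0.
rewrite -(ler_pM2r lam0) hR mulrC //.
Qed.

Lemma le_bigmaxR_seq (I : eqType) (s : seq I) (F : I -> R) i : i \in s ->
  F i <= \big[Num.max/0]_(j <- s) F j.
Proof.
elim: s => // x s IH; rewrite in_cons big_cons => /orP[/eqP ->|/IH H].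
  by rewrite le_max lexx.
by rewrite le_max H orbT.
Qed.

Lemma le_bigmaxR_ord n (F : 'I_n -> R) i : F i <= \big[Num.max/0]_(j < n) F j.
Proof. by apply: le_bigmaxR_seq; rewrite mem_index_enum. Qed.

End L3.



Section L4.
Variable R : realType.

Lemma sum_pad (g : R -> R) (A : seq (R * R)) n : (size A <= n)%N -> g 0 = 0 ->
  \sum_(I <- A) g (bar_len I) = \sum_(i < n) g (bar_len (nth (0,0) A i)).
Proof.
move=> hn g0; rewrite (big_nth (0,0)) big_mkord.
rewrite -(subnKC hn) big_split_ord /= [X in _ + X]big1 ?addr0 //.
move=> i _; rewrite nth_default /=; first by rewrite /bar_len subrr.
exact: leq_addr.
Qed.

Lemma len_pad (A : seq (R * R)) ta i :
  bar_len (nth (0,0) (pad A ta) i) = bar_len (nth (0,0) A i).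
Proof.
rewrite /pad nth_cat; case: ltnP => h //.
rewrite [nth _ A i]nth_default //.
case: (ltnP (i - size A) (size ta)) => h2.
  by rewrite (nth_map 0) // /bar_len /= !subrr.
by rewrite nth_default ?size_map // /bar_len /= !subrr.
Qed.

Lemma len_ge0 (A : seq (R * R)) i : barcode A -> 0 <= bar_len (nth (0,0) A i).
Proof.
move=> /(all_nthP (0,0)) hA.
case: (ltnP i (size A)) => h; first by rewrite /bar_len subr_ge0; apply: hA.
by rewrite nth_default // /bar_len subrr.
Qed.

Lemma len_diff (I J : R * R) :
  `|bar_len I - bar_len J| <= 2 * Num.max `|I.1 - J.1| `|I.2 - J.2|.
Proof.
have -> : bar_len I - bar_len J = (I.2 - J.2) - (I.1 - J.1) by rewrite /bar_len; ring.
set M := Num.max _ _.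
have h1 : `|I.1 - J.1| <= M by rewrite le_max lexx.
have h2 : `|I.2 - J.2| <= M by rewrite le_max lexx orbT.
apply: le_trans (ler_normB _ _) _; lra.
Qed.

Lemma max_powR (u v q : R) : 0 <= u -> 0 <= v -> 0 <= q ->
  Num.max (u `^ q) (v `^ q) = (Num.max u v) `^ q.
Proof.
move=> u0 v0 q0; case/orP: (le_total u v) => h.
  rewrite (max_r h) max_r //; exact: ge0_ler_powR.
rewrite (max_l h) max_l //; exact: ge0_ler_powR.
Qed.

End L4.



Lemma eqle (R : realType) (x y : R) : x = y -> x <= y.
Proof. by move->. Qed.

Theorem theorem4 (R : realType) (p : \bar R) (A B : seq (R * R)) :
  (1%:E <= p)%E ->
  barcode A -> barcode B ->
  0 < total_len A -> 0 < total_len B ->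
  relerr p A B < 4^-1 ->
  `|pentropy A - pentropy B| <=
    2 * relerr p A B * (ln ((nmax A B)%:R) - ln (2 * relerr p A B)).
Proof.
move=> p1 bA bB LA0 LB0 rlt.
have nA : (size A <= nmax A B)%N by rewrite /nmax leq_maxl.
have nB : (size B <= nmax A B)%N by rewrite /nmax leq_maxr.
have sA0 : (0 < size A)%N.
  rewrite lt0n; apply/negP => /eqP/size0nil HA.
  by rewrite HA /total_len big_nil ltxx in LA0.
have n0 : (0 < nmax A B)%N by apply: leq_trans nA.
have relE : relerr p A B = 2 * nfactor p (nmax A B) * wdist p A B / Lmax A B by [].
have LmaxE : Lmax A B = Num.max (total_len A) (total_len B) by [].
move: relE LmaxE rlt.
set n := nmax A B; set LA := total_len A; set LB := total_len B.
set L := Lmax A B; set r := relerr p A B => relE LmaxE rlt.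
have L0 : 0 < L by rewrite LmaxE lt_max LA0.
pose a (i : 'I_n) := bar_len (nth (0,0) A i).
pose b (i : 'I_n) := bar_len (nth (0,0) B i).
have a0 i : 0 <= a i by apply: len_ge0.
have b0 i : 0 <= b i by apply: len_ge0.
have sA : LA = \sum_i a i by rewrite /LA /total_len (@sum_pad R id A n).
have sB : LB = \sum_i b i by rewrite /LB /total_len (@sum_pad R id B n).
have x00 : xlnx (0 : R) = 0 by rewrite /xlnx eqxx.
have PA : pentropy A = - \sum_i xlnx (a i / LA).
  by rewrite /pentropy (@sum_pad R (fun x => xlnx (x / LA)) A n) // mul0r.
have PB : pentropy B = - \sum_i xlnx (b i / LB).
  by rewrite /pentropy (@sum_pad R (fun x => xlnx (x / LB)) B n) // mul0r.
pose P i := a i / LA.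
pose Q i := b i / LB.
pose T (s : 'S_n) := \sum_i `|P i - Q (s i)|.
have [s0 _ Hmin] := @arg_minP _ _ _ (1%g : 'S_n) xpredT T isT.
pose mm ta tb (s : 'S_n) (i : 'I_n) := mcost_inf (pad A ta) (pad B tb) s i.
have key : forall ta tb (s : 'S_n), T s0 <= 4 * (\sum_i mm ta tb s i) / L.
  move=> ta tb s; apply: le_trans (Hmin s isT) _.
  pose b' i := b (s i).
  have sb' : \sum_i b' i = LB by rewrite sB; exact: (esym (reindex_inj (@perm_inj _ s))).
  have Sa0 : 0 < \sum_i a i by rewrite -sA.
  have Sb0 : 0 < \sum_i b' i by rewrite sb'.
  have H := @l1_prob R n a b' a0 (fun i => b0 (s i)) Sa0 Sb0.
  rewrite sb' -sA -LmaxE -/L in H.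
  apply: le_trans H _.
  have hD : \sum_i `|a i - b' i| <= 2 * \sum_i mm ta tb s i.
    rewrite mulr_sumr; apply: ler_sum => i _.
    rewrite /a /b' /b -(@len_pad R A ta) -(@len_pad R B tb).
    exact: len_diff.
  rewrite ler_pM2r ?invr_gt0 //.
  have -> : (4 : R) = 2 * 2 by lra.
  by rewrite -mulrA ler_pM2l.
have T0 : 0 <= T s0 by apply: sumr_ge0.
have mm0 : forall ta tb s i, 0 <= mm ta tb s i.
  by move=> ta tb s i; rewrite /mm /mcost_inf le_max normr_ge0.
have n0R : (0 : R) < n%:R by rewrite ltr0n.
have Tr : T s0 <= 2 * r.
  clearbody r; move: relE; case: p p1 => [q| |] p1 relE; last by [].
    rewrite lee_fin in p1.
    have q0 : 0 < q by lra.
    rewrite relE /nfactor /wdist.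
    set w := inf (wcosts q A B).
    set N := n%:R `^ (1 - q^-1).
    have N0 : 0 < N by apply: powR_gt0.
    set K := 4 * N / L.
    have K0 : 0 < K by apply: divr_gt0 => //; apply: mulr_gt0 => //; lra.
    have lb : lbound (wcosts q A B) ((T s0 / K) `^ q).
      move=> c [ta [tb [s [_ _ ->]]]].
      have hc : \sum_(i < n) mcost q (pad A ta) (pad B tb) s i =
                \sum_i (mm ta tb s i) `^ q.
        apply: eq_bigr => i _; rewrite /mcost /mm /mcost_inf max_powR //; lra.
      rewrite hc; set c' := \sum_i _.
      have hpm := @powmean R n (mm ta tb s) q n0 p1 (mm0 ta tb s).
      have h1 : T s0 / K <= c' `^ q^-1.
        rewrite ler_pdivrMr //.
        apply: le_trans (key ta tb s) _.
        apply: (@le_trans _ _ (4 * (N * c' `^ q^-1) / L)).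
          by rewrite ler_pM2r ?invr_gt0 // ler_pM2l //; lra.
        by rewrite /K; apply: eqle; ring.
      have c'0 : 0 <= c' by apply: sumr_ge0 => i _; apply: powR_ge0.
      have := @ge0_ler_powR R q (ltW q0) _ _ _ _ h1.
      rewrite -powRrM mulVf ?gt_eqF // powRr1 //; apply.
        by rewrite nnegrE divr_ge0 // ltW.
      by rewrite nnegrE powR_ge0.
    have ne : (wcosts q A B !=set0)%classic.
      exists (\sum_(i < n) mcost q (pad A (nseq (n - size A) 0)) (pad B (nseq (n - size B) 0)) 1%g i).
      by exists (nseq (n - size A) 0), (nseq (n - size B) 0), 1%g; rewrite !size_nseq.
    have hw := lb_le_inf ne lb.
    have w0 : 0 <= w.
      apply: le_trans hw; exact: powR_ge0.
    have := @ge0_ler_powR R q^-1 _ _ _ _ _ hw.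
    rewrite -powRrM mulfV ?gt_eqF // powRr1; last by rewrite divr_ge0 // ltW.
    move=> /(_ _ _ _) H.
    have H' : T s0 / K <= w `^ q^-1.
      apply: H; rewrite ?invr_ge0 ?nnegrE ?powR_ge0 //; lra.
    rewrite ler_pdivrMr // in H'.
    apply: le_trans H' _; rewrite /K; apply: eqle; field.
    by rewrite gt_eqF.
  rewrite relE /nfactor /wdist.
  set w := inf (wcosts_inf A B).
  have lb : lbound (wcosts_inf A B) (T s0 * L / (4 * n%:R)).
    move=> c [ta [tb [s [_ _ ->]]]].
    set c' := \big[Num.max/0]_(i < n) _.
    have hs : \sum_i mm ta tb s i <= n%:R * c'.
      have : \sum_i mm ta tb s i <= \sum_(i < n) c'.
        apply: ler_sum => i _; rewrite /c' /mm; exact: le_bigmaxR_ord.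
      by rewrite sumr_const card_ord mulr_natl.
    rewrite ler_pdivrMr; last by apply: mulr_gt0 => //; lra.
    rewrite -ler_pdivlMr //.
    apply: le_trans (key ta tb s) _.
    rewrite ler_pM2r ?invr_gt0 //.
    have -> : c' * (4 * n%:R) = 4 * (n%:R * c') by ring.
    by rewrite ler_pM2l //; lra.
  have ne : (wcosts_inf A B !=set0)%classic.
    exists (\big[Num.max/0]_(i < n) mcost_inf (pad A (nseq (n - size A) 0)) (pad B (nseq (n - size B) 0)) 1%g i).
    by exists (nseq (n - size A) 0), (nseq (n - size B) 0), 1%g; rewrite !size_nseq.
  have hw := lb_le_inf ne lb.
  rewrite ler_pdivrMr in hw; last by apply: mulr_gt0 => //; lra.
  rewrite -ler_pdivlMr // in hw.
  apply: le_trans hw _; apply: eqle; field.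
  by rewrite gt_eqF.
have S2 : 2 * r <= 2^-1 by lra.
have aLA : forall i, a i <= LA.
  by move=> i; rewrite sA (bigD1 i) //= lerDl sumr_ge0.
have bLB : forall i, b i <= LB.
  by move=> i; rewrite sB (bigD1 i) //= lerDl sumr_ge0.
have P01 : forall i, 0 <= P i <= 1.
  move=> i; rewrite /P divr_ge0 //= ?ler_pdivrMr ?mul1r //; exact: ltW.
have Q01 : forall i, 0 <= Q i <= 1.
  move=> i; rewrite /Q divr_ge0 //= ?ler_pdivrMr ?mul1r //; exact: ltW.
have tle : forall i, `|P i - Q (s0 i)| <= 2^-1.
  move=> i; apply: le_trans S2; apply: le_trans Tr.
  by rewrite /T (bigD1 i) //= lerDl sumr_ge0.
have E : pentropy A - pentropy B = \sum_i (xlnx (Q (s0 i)) - xlnx (P i)).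
  have hQ : \sum_i xlnx (b i / LB) = \sum_i xlnx (Q (s0 i)).
    exact: (reindex_inj (@perm_inj _ s0)).
  rewrite PA PB hQ sumrB /P; lra.
rewrite E; apply: le_trans (ler_norm_sum _ _ _) _.
apply: (@le_trans _ _ (\sum_i - xlnx `|P i - Q (s0 i)|)).
  by apply: ler_sum => i _; apply: xlnx_cont.
apply: le_trans (@gibbs R n (fun i => `|P i - Q (s0 i)|) n0 (fun i => normr_ge0 _)) _.
apply: le_trans (@fmono R n _ _ n0 T0 Tr S2 _) _; last by rewrite xlnxE mulrBr.
case: (ltnP 1 n) => hn; [by right | left].
have alleq : forall i j : 'I_n, i = j.
  move=> i j; apply/val_inj => /=.
  have hi : (i < 1)%N := leq_trans (ltn_ord i) hn.
  have hj : (j < 1)%N := leq_trans (ltn_ord j) hn.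
  by move: hi hj; rewrite !ltnS !leqn0 => /eqP -> /eqP ->.
have sP : \sum_i P i = 1 by rewrite /P -mulr_suml -sA mulfV // gt_eqF.
have sQ : \sum_i Q i = 1 by rewrite /Q -mulr_suml -sB mulfV // gt_eqF.
rewrite /T big1 // => i _.
rewrite -(alleq i (s0 i)).
have -> : P i = 1 by rewrite -sP (bigD1 i) //= big1 ?addr0 // => j; rewrite (alleq j i) eqxx.
have -> : Q i = 1 by rewrite -sQ (bigD1 i) //= big1 ?addr0 // => j; rewrite (alleq j i) eqxx.
by rewrite subrr normr0.
Qed.
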